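(* Let $F:\mathbb{R}^p\to\mathbb{R}^p$ be single-valued and $T:\mathbb{R}^p\rightrightarrows\mathbb{R}^p$ be maximally $3$-cyclically monotone, $\Phi:=F+T$, and let $x^\star\in\mathrm{zer}\,\Phi$. Let $\kappa_1,\kappa_2\ge0$, $\beta>0$, $\eta>0$, and let $\{(x^k,y^k)\}$ be generated by: start from $x^0\in\mathrm{dom}\,\Phi$, set $x^{-1}=y^{-1}:=x^0$, and for $k\ge0$ $$y^k:=J_{\frac{\eta}{\beta}T}\big(x^k-\tfrac{\eta}{\beta}u^k\big),\qquad x^{k+1}:=J_{\eta T}\big(x^k-\eta Fy^k\big),$$ where $u^k\in\mathbb{R}^p$ satisfies $\|Fx^k-u^k\|^2\le\kappa_1\|Fx^k-Fy^{k-1}\|^2+\kappa_2\|Fx^k-Fx^{k-1}\|^2$. Then for any $\gamma>0$ and $k\ge0$, $$\begin{aligned}\|x^{k+1}-x^\star\|^2\le{}&\|x^k-x^\star\|^2-(1-\beta)\|x^{k+1}-x^k\|^2-\beta\|x^k-y^k\|^2-(\beta-\gamma)\|x^{k+1}-y^k\|^2\\&+\tfrac{\eta^2}{\gamma}\|Fy^k-u^k\|^2-2\eta\langle Fy^k-Fx^\star,y^k-x^\star\rangle.\end{aligned}$$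
   Context: $\mathrm{zer}\,\Phi:=\{x:0\in Fx+Tx\}$. $J_{\lambda T}:=(\mathbb{I}+\lambda T)^{-1}$ is the resolvent of $\lambda T$. $T$ is $3$-cyclically monotone if $\sum_{i=1}^3\langle u^i,x^i-x^{i+1}\rangle\ge0$ for all $(x^i,u^i)\in\mathrm{gra}\,T$ with $x^4=x^1$; maximally so if its graph is not properly contained in the graph of another $3$-cyclically monotone operator. *)

(* Defs.v *)
From HB Require Import structures.
From mathcomp Require Import all_boot all_order all_algebra.
From mathcomp Require Import reals.
Set Implicit Arguments. Unset Strict Implicit. Unset Printing Implicit Defensive.
Import Order.TTheory GRing.Theory Num.Theory.
Local Open Scope ring_scope.

Section Defs.
Variables (R : realType) (p : nat).
Local Notation V := 'rV[R]_p.

Definition dot (u v : V) : R := \sum_(i < p) u 0 i * v 0 i.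
Definition sqnorm (u : V) : R := dot u u.

(* A set-valued operator T : R^p => R^p is given by its graph:
   T x u  means  u \in T x. *)
Definition setop := V -> V -> Prop.

Definition cyc3_monotone (T : setop) : Prop :=
  forall x1 x2 x3 u1 u2 u3, T x1 u1 -> T x2 u2 -> T x3 u3 ->
    0 <= dot u1 (x1 - x2) + dot u2 (x2 - x3) + dot u3 (x3 - x1).

Definition max_cyc3_monotone (T : setop) : Prop :=
  cyc3_monotone T /\
  forall S : setop, cyc3_monotone S -> (forall x u, T x u -> S x u) ->
    forall x u, S x u -> T x u.

(* y \in J_{lam T}(z) = (I + lam T)^{-1}(z)  iff  z \in y + lam T y *)
Definition resolvent (lam : R) (T : setop) (z y : V) : Prop :=
  exists v, T y v /\ z = y + lam *: v.

(* dom (F + T) = dom T, since F is single-valued everywhere defined *)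
Definition in_dom_sum (F : V -> V) (T : setop) (x : V) : Prop :=
  exists v, T x v.

Definition in_zer_sum (F : V -> V) (T : setop) (x : V) : Prop :=
  exists v, T x v /\ F x + v = 0.

(* a^{k-1}, with a^{-1} := a0 (the paper sets x^{-1} = y^{-1} := x^0) *)
Definition prevk (a0 : V) (a : nat -> V) (k : nat) : V :=
  match k with 0 => a0 | k'.+1 => a k' end.

End Defs.

(* Main.v *)
Require Import Defs.
From HB Require Import structures.
From mathcomp Require Import all_boot all_order all_algebra.
From mathcomp Require Import reals.
From mathcomp Require Import ring lra.
Import Order.TTheory GRing.Theory Num.Theory.
Local Open Scope ring_scope.

Theorem lemma4 (R : realType) (p : nat)
  (F : 'rV[R]_p -> 'rV[R]_p) (T : 'rV[R]_p -> 'rV[R]_p -> Prop)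
  (xstar : 'rV[R]_p) (kappa1 kappa2 beta eta : R)
  (x y u : nat -> 'rV[R]_p) :
  max_cyc3_monotone T ->
  in_zer_sum F T xstar ->
  0 <= kappa1 -> 0 <= kappa2 -> 0 < beta -> 0 < eta ->
  in_dom_sum F T (x 0%N) ->
  (forall k, sqnorm (F (x k) - u k) <=
       kappa1 * sqnorm (F (x k) - F (prevk (x 0%N) y k))
     + kappa2 * sqnorm (F (x k) - F (prevk (x 0%N) x k))) ->
  (forall k, resolvent (eta / beta) T (x k - (eta / beta) *: u k) (y k)) ->
  (forall k, resolvent eta T (x k - eta *: F (y k)) (x k.+1)) ->
  forall (gamma : R) (k : nat), 0 < gamma ->
    sqnorm (x k.+1 - xstar) <=
      sqnorm (x k - xstar)
      - (1 - beta) * sqnorm (x k.+1 - x k)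
      - beta * sqnorm (x k - y k)
      - (beta - gamma) * sqnorm (x k.+1 - y k)
      + eta ^+ 2 / gamma * sqnorm (F (y k) - u k)
      - 2 * eta * dot (F (y k) - F xstar) (y k - xstar).
Proof.
move=> [Tmon _] [c [Tc hc]] _ _ bpos epos _ _ Hy Hx gamma k gpos.
have [a [Ta ha]] := Hy k.
have [b [Tb hb]] := Hx k.
have M := Tmon _ _ _ _ _ _ Ta Tb Tc.
set v := gamma *: (x k.+1 - y k) + eta *: (F (y k) - u k).
have Hv : 0 <= gamma^-1 * sqnorm v.
  apply: mulr_ge0; first by rewrite invr_ge0 ltW.
  by apply: sumr_ge0 => i _; apply: sqr_ge0.
rewrite -subr_ge0.
set rhs := (X in 0 <= X - _).
set lhs := (X in 0 <= _ - X).
have -> : rhs - lhs = gamma^-1 * sqnorm v + 2 * eta *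
   (dot a (y k - x k.+1) + dot b (x k.+1 - xstar) + dot c (xstar - y k)).
  apply/eqP; rewrite -subr_eq0; apply/eqP.
  rewrite /rhs /lhs /v /sqnorm /dot.
  rewrite !mulr_sumr -!sumrB -!big_split /= -!sumrB.
  rewrite !mulr_sumr -!big_split /= -!sumrB.
  apply: big1 => i _.
  have hai := congr1 (fun m : 'rV[R]_p => m 0 i) ha.
  have hbi := congr1 (fun m : 'rV[R]_p => m 0 i) hb.
  have hci := congr1 (fun m : 'rV[R]_p => m 0 i) hc.
  move: hai hbi hci; rewrite !mxE => hai hbi hci.
  have bne : beta != 0 by rewrite gt_eqF.
  have ene : eta != 0 by rewrite gt_eqF.
  have gne : gamma != 0 by rewrite gt_eqF.
  have -> : a 0 i = (x k 0 i - eta / beta * u k 0 i - y k 0 i) / (eta / beta).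
    rewrite hai; field; rewrite ?bne ?ene //.
  have -> : b 0 i = (x k 0 i - eta * F (y k) 0 i - x k.+1 0 i) / eta.
    rewrite hbi; field; rewrite ?ene //.
  have -> : c 0 i = - F xstar 0 i.
    by apply/eqP; rewrite -subr_eq0 opprK addrC hci.
  field; rewrite ?bne ?ene ?gne //.
apply: addr_ge0 => //; apply: mulr_ge0; first by apply: mulr_ge0 => //; apply: ltW.
by [].
Qed.
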